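(* Let $X$ be a tropical hypersurface in $\mathbb{R}^n$, $n>3$, with dual subdivision $S_X$ of its Newton polytope $\Delta$. Let $\delta_1,\dots,\delta_k$ be all the $n$-dimensional polytopes of $S_X$ other than simplices, ordered in any way. Then $$rk(X)\le\#Vert(S_X)-1-\sum_{i=1}^{k}\Big(\#\Big(Vert(\delta_i)\setminus\bigcup_{j<i}Vert(\delta_j)\Big)-n+\dim\mathrm{ConvHull}\Big(Vert(\delta_i)\cap\bigcup_{j<i}Vert(\delta_j)\Big)\Big),$$ with the convention that the convex hull of the empty set has dimension $-1$.
   Context: A tropical hypersurface $X\subset\mathbb{R}^n$ is the corner locus of a tropical polynomial $N(x)=\max_{\omega\in\Delta\cap\mathbb{Z}^n}(\langle\omega,x\rangle+c_\omega)$, where $\Delta$ is its Newton polytope; $S_X$ is the dual subdivision (the regular subdivision of $\Delta$ induced by $\omega\mapsto c_\omega$), $Vert(S_X)$ its vertex set and $Vert(\delta)$ the vertex set of a cell $\delta$. The rank $rk(X)$ is the dimension of the space of tropical hypersurfaces with the same dual subdivision, i.e. of the set of vectors $(c_\omega)_{\omega\in Vert(S_X)}$, modulo adding a common constant, inducing exactly $S_X$. *)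

(* Defs.v *)
From HB Require Import structures.
From Stdlib Require Import ClassicalEpsilon.
From mathcomp Require Import all_boot all_order all_algebra.
Set Implicit Arguments. Unset Strict Implicit. Unset Printing Implicit Defensive.
Import Order.TTheory GRing.Theory Num.Theory.
Local Open Scope ring_scope.

Definition pbool (P : Prop) : bool :=
  if excluded_middle_informative P then true else false.

Section Tropical.
Variables (R : realFieldType) (n N : nat).
(* A tropical polynomial with N monomials: exponents pts i in Z^n and
   coefficients c i in R. *)
Variable pts : 'I_N -> 'rV[int]_n.

Definition toR (w : 'rV[int]_n) : 'rV[R]_n := map_mx (fun z : int => z%:~R) w.

Definition monval (c : 'I_N -> R) (i : 'I_N) (x : 'rV[R]_n) : R :=
  (toR (pts i) *m x^T) 0 0 + c i.

Definition argmaxset (P : {set 'I_N}) (c : 'I_N -> R) (x : 'rV[R]_n)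
  : {set 'I_N} :=
  [set i in P | [forall j in P, monval c j x <= monval c i x]].

Definition in_conv (T : {set 'I_N}) (p : 'rV[R]_n) : Prop :=
  exists lam : 'I_N -> R,
    (forall j, 0 <= lam j) /\ (forall j, j \notin T -> lam j = 0) /\
    \sum_j lam j = 1 /\ \sum_j lam j *: toR (pts j) = p.

Definition is_vtx (S : {set 'I_N}) (i : 'I_N) : Prop :=
  i \in S /\ ~ in_conv (S :\ i) (toR (pts i)).

Definition vtxset (S : {set 'I_N}) : {set 'I_N} :=
  [set i in S | pbool (is_vtx S i)].

(* cells of the regular subdivision of ConvHull(pts P) induced by the
   lifting i |-> c i : the convex hulls of the argmax sets *)
Definition cellsupp (P : {set 'I_N}) (c : 'I_N -> R) : {set {set 'I_N}} :=
  [set S : {set 'I_N} | pbool (exists x : 'rV[R]_n, argmaxset P c x = S)].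

(* the subdivision, each polytope being represented by its vertex set *)
Definition subdiv (P : {set 'I_N}) (c : 'I_N -> R) : {set {set 'I_N}} :=
  [set vtxset S | S in cellsupp P c].

Definition vertS (c : 'I_N -> R) : {set 'I_N} :=
  \bigcup_(D in subdiv setT c) D.

Definition dimconv (T : {set 'I_N}) : int :=
  match [pick i in T] with
  | Some i0 => (\rank (\matrix_(i < N, j < n)
                  (if i \in T then toR (pts i) 0 j - toR (pts i0) 0 j else 0)))%:Z
  | None => -1
  end.

Definition nonsimplex_cells (c : 'I_N -> R) : {set {set 'I_N}} :=
  [set D in subdiv setT c | (dimconv D == n%:Z) && (#|D| != n.+1)].

(* coefficient vectors on Vert(S_X) (extended by 0 elsewhere) inducing
   exactly the subdivision S_X *)
Definition same_subdiv (c : 'I_N -> R) (c' : 'rV[R]_N) : Prop :=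
  (forall i, i \notin vertS c -> c' 0 i = 0) /\
  subdiv (vertS c) (fun i => c' 0 i) = subdiv setT c.

(* indicator of Vert(S_X): the direction of adding a common constant *)
Definition constdir (c : 'I_N -> R) : 'rV[R]_N :=
  \row_i (if i \in vertS c then 1 else 0).

(* rk(X) >= d : there are d+1 points of the space of such coefficient
   vectors whose images in the quotient by constants are affinely
   independent *)
Definition rank_atleast (c : 'I_N -> R) (d : nat) : Prop :=
  exists cs : 'I_d.+1 -> 'rV[R]_N,
    (forall k, same_subdiv c (cs k)) /\
    \rank (col_mx (constdir c)
             (\matrix_(k < d, j < N) (cs (lift ord0 k) 0 j - cs ord0 0 j)))
      = d.+1.

Definition rhs_bound (c : 'I_N -> R) (s : seq {set 'I_N}) : int :=
  (#|vertS c|%:Z - 1 -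
   \sum_(i < size s)
     (#|nth set0 s i :\: \bigcup_(j < i) nth set0 s j|%:Z - n%:Z
      + dimconv (nth set0 s i :&: \bigcup_(j < i) nth set0 s j)))%R.

End Tropical.

(* Main.v *)
Require Import Defs.
From mathcomp Require Import all_boot all_order all_algebra.
From mathcomp Require Import ring zify.
From Stdlib Require Import ClassicalEpsilon.
Import Order.TTheory GRing.Theory Num.Theory.
Local Open Scope ring_scope.

Lemma pboolP (P : Prop) : pbool P -> P.
Proof. by rewrite /pbool; case: excluded_middle_informative. Qed.

Section Helpers.
Variables (R : realFieldType) (n N : nat) (pts : 'I_N -> 'rV[int]_n).

Definition Pm (S : {set 'I_N}) : 'M[R]_N :=
  diag_mx (\row_j (if j \in S then 1 else 0)).

Lemma mulPm m (X : 'M[R]_(m,N)) S :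
  X *m Pm S = \matrix_(i,j) (if j \in S then X i j else 0).
Proof.
rewrite mul_mx_diag; apply/matrixP=> i j; rewrite !mxE.
by case: ifP => _; rewrite ?mulr1 ?mulr0.
Qed.

Lemma PmE S : Pm S = \sum_(i in S) delta_mx i i.
Proof.
rewrite /Pm diag_mx_sum_delta [RHS]big_mkcond /=; apply: eq_bigr => i _.
by rewrite mxE; case: ifP => _; rewrite ?scale1r ?scale0r.
Qed.

Lemma rank_Pm S : (\rank (Pm S) <= #|S|)%N.
Proof.
rewrite PmE -sum1_card.
elim/big_rec2: _ => [|i y1 y2 _ IH]; first by rewrite mxrank0.
apply: leq_trans (mxrank_add _ _) _.
by rewrite mxrank_delta leq_add2l.
Qed.

Lemma PmM S T : Pm S *m Pm T = Pm (S :&: T).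
Proof.
rewrite mulPm; apply/matrixP=> i j; rewrite !mxE inE.
case: (eqVneq i j) => [<-|_]; rewrite ?mulr0n ?mulr1n; last by case: ifP.
by case: (i \in S); case: (i \in T).
Qed.

Lemma mulPm0 m (X : 'M[R]_(m,N)) : X *m Pm set0 = 0.
Proof. by rewrite mulPm; apply/matrixP=> i j; rewrite !mxE inE. Qed.

Definition top (D : {set 'I_N}) : 'M[R]_(n,N) :=
  \matrix_(k,j) (if j \in D then toR R (pts j) 0 k else 0).
Definition ind (D : {set 'I_N}) : 'rV[R]_N :=
  \row_j (if j \in D then 1 else 0).
Definition Bm D := col_mx (top D) (ind D).

Lemma BmP D T : Bm D *m Pm T = Bm (D :&: T).
Proof.
rewrite /Bm mul_col_mx !mulPm; congr col_mx; apply/matrixP => i j;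
by rewrite !mxE inE; case: (j \in D); case: (j \in T).
Qed.

Lemma rank_dim T : (dimconv R pts T + 1 <= (\rank (Bm T))%:Z)%R.
Proof.
rewrite /dimconv; case: pickP => [i0 Hi0|_]; last by rewrite addNr.
set Df := \matrix_(i < N, j < n) _.
set A := Df^T. set b := ind T.
have eG : col_mx A b =
   block_mx 1%:M (- (toR R (pts i0))^T) 0 1%:M *m Bm T.
  rewrite mul_block_col !mul1mx mul0mx add0r; congr col_mx.
  apply/matrixP=> k j; rewrite mulNmx !mxE big_ord1 !mxE.
  by case: ifP => _; rewrite ?mulr1 ?mulr0 ?subr0.
have h1 : (\rank (col_mx A b) <= \rank (Bm T))%N by rewrite eG mxrankM_maxr.
have rb : \rank b = 1%N.
  rewrite rank_rV; apply/eqP; rewrite eqb1.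
  apply/eqP => /rowP /(_ i0); rewrite !mxE Hi0 => /eqP; by rewrite oner_eq0.
have rc : \rank (A :&: b) = 0%N.
  have hle := mxrankS (capmxSr A b); rewrite rb in hle.
  case: (posnP (\rank (A :&: b))) => // hpos.
  have h : \rank (A :&: b) = 1%N by lia.
  have := (mxrank_leqif_eq (capmxSr A b)).2.
  rewrite rb h eqxx => /esym /andP[_ hb].
  have : (b <= A)%MS by apply: submx_trans hb (capmxSl _ _).
  case/submxP => D0 /rowP /(_ i0) /eqP; rewrite !mxE Hi0 big1 ?oner_eq0 // => k _.
  by rewrite !mxE Hi0 subrr mulr0.
have := mxrank_sum_cap A b; rewrite rb rc addn0 addsmxE mxrank_tr => h2.
by rewrite -PoszD lez_nat -h2.
Qed.


Lemma step m (W : 'M[R]_(m,N)) U D : (W *m Pm D <= Bm D)%MS ->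
  (\rank (W *m Pm (U :|: D)) + \rank (Bm (D :&: U)) <=
   \rank (W *m Pm U) + (n + 1))%N.
Proof.
move=> HD.
set W' := (W :&: kermx (Pm U))%MS.
have h1 := mxrank_mul_ker W (Pm (U :|: D)).
have h2 := mxrank_mul_ker W (Pm U).
have h3 := mxrank_mul_ker W' (Pm (U :|: D)).
have z1 : W' *m Pm U = 0 by apply/eqP; rewrite -sub_kermx capmxSr.
have h4 : (\rank (W' :&: kermx (Pm (U :|: D))) <=
           \rank (W :&: kermx (Pm (U :|: D))))%N.
  by apply: mxrankS; apply: capmxS; [exact: capmxSl | exact: submx_refl].
have eY : W' *m Pm (U :|: D) = W' *m Pm D.
  move/matrixP: z1 => Z.
  rewrite !mulPm; apply/matrixP => i j; rewrite !mxE inE.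
  have := Z i j; rewrite mulPm !mxE.
  case: (j \in U) => /=; last by [].
  by move=> ->; case: ifP.
have hY : (W' *m Pm D <= Bm D :&: kermx (Pm (D :&: U)))%MS.
  rewrite sub_capmx; apply/andP; split.
    by apply: submx_trans HD; apply: submxMr; exact: capmxSl.
  rewrite sub_kermx -mulmxA PmM.
  rewrite (_ : D :&: (D :&: U) = U :&: (D :&: U)); last first.
    by apply/setP => x; rewrite !inE; case: (x \in D); case: (x \in U).
  by rewrite -PmM mulmxA z1 mul0mx.
have h5 := mxrank_mul_ker (Bm D) (Pm (D :&: U)).
rewrite BmP setIA setIid in h5.
have h6 := mxrankS hY.
have h7 := rank_leq_row (Bm D).
rewrite eY in h3.
rewrite -/W' in h2. clearbody W'. set k1 := \rank (W :&: _) in h1 h4. set k2 := \rank (W' :&: _) in h3 h4. set kB := \rank (Bm D :&: _) in h5 h6. set rB := \rank (Bm D) in h5 h7. set x := \rank (W *m Pm (U :|: D)) in h1 *. set y := \rank (W *m Pm U) in h2 *. lia.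
Qed.

Lemma final m (W : 'M[R]_(m,N)) U V : W *m Pm (~: V) = 0 ->
  (\rank W <= \rank (W *m Pm U) + #|V :\: U|)%N.
Proof.
move=> HV.
have h := mxrank_mul_ker W (Pm U).
set Z := (W :&: kermx (Pm U))%MS in h.
have z1 : Z *m Pm U = 0 by apply/eqP; rewrite -sub_kermx capmxSr.
have z2 : Z *m Pm (~: V) = 0.
  have : (Z *m Pm (~: V) <= W *m Pm (~: V))%MS.
    by apply: submxMr; apply: capmxSl.
  by rewrite HV => /submx0null.
have eZ : Z = Z *m Pm (V :\: U).
  rewrite mulPm; apply/matrixP=> i j; rewrite mxE.
  move/matrixP: z1 => /(_ i j). move/matrixP: z2 => /(_ i j).
  rewrite !mulPm !mxE !inE.
  by case: (j \in U); case: (j \in V) => //= -> //.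
have : (\rank Z <= #|V :\: U|)%N.
  by rewrite eZ; apply: leq_trans (mxrankM_maxr _ _) (rank_Pm _).
clearbody Z. set z := \rank Z in h *. set y := \rank (W *m Pm U) in h *. lia.
Qed.

Lemma aff c (c' : 'rV[R]_N) D : same_subdiv pts c c' ->
  D \in subdiv pts setT c -> (c' *m Pm D <= Bm D)%MS.
Proof.
case=> _ Hs HD; rewrite -Hs in HD.
case/imsetP: HD => S HS ->.
rewrite inE in HS; case/pboolP: HS => x Hx.
have sub : vtxset R pts S \subset S.
  by apply/subsetP => i; rewrite inE => /andP[].
set D0 := vtxset R pts S in sub *.
case: (pickP (mem D0)) => [j0 Hj0|H0]; last first.
  rewrite (_ : c' *m Pm D0 = 0) ?sub0mx //.
  by rewrite mulPm; apply/matrixP => i j; rewrite !mxE; move: (H0 j) => /= ->.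
set M := monval pts (fun i => c' 0 i) j0 x.
have key : forall j, j \in D0 ->
    c' 0 j = M - (toR R (pts j) *m x^T) 0 0.
  move=> j Hj.
  have Sj : j \in S := subsetP sub j Hj.
  have Sj0 : j0 \in S := subsetP sub j0 Hj0.
  rewrite -Hx /argmaxset !inE in Sj Sj0.
  case/andP: Sj => Vj /forall_inP Mj.
  case/andP: Sj0 => Vj0 /forall_inP Mj0.
  have e : monval pts (fun i => c' 0 i) j x = M.
    by apply/eqP; rewrite eq_le Mj0 ?Mj.
  move: e; rewrite /monval => <-; ring.
apply/submxP; exists (row_mx (- x) M%:M).
rewrite mul_row_col; apply/matrixP=> i j; rewrite mulPm !mxE (ord1 i).
case: (boolP (j \in D0)) => Hj.
  rewrite key // !mxE big_ord1 !mxE /= Hj mulr1n mulr1 addrC -sumrN.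
  congr (_ + _); apply: eq_bigr => k _; rewrite !mxE Hj mulNr mulrC.
  by [].
rewrite big_ord1 !mxE (negbTE Hj) mulr0 addr0 big1 // => k _.
by rewrite !mxE (negbTE Hj) mulr0.
Qed.

Lemma main_aux (c : 'I_N -> R) (s : seq {set 'I_N}) (d : nat) :
  (forall D, D \in s -> D \in subdiv pts setT c) ->
  rank_atleast pts c d -> (d%:Z <= rhs_bound pts c s)%R.
Proof.
move=> Hs [cs [Hcs Hrk]].
set V := vertS pts c.
move: Hrk. set Dm := \matrix_(k < d, j < N) _. set W := col_mx _ Dm => Hrk.
have Vsub : forall D, D \in subdiv pts setT c -> D \subset V.
  by move=> D HD; rewrite /V /vertS; apply: (bigcup_sup D HD).
have HV : W *m Pm (~: V) = 0.
  rewrite /W mul_col_mx (_ : constdir pts c *m _ = 0).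
    rewrite (_ : Dm *m _ = 0) ?col_mx0 //.
    rewrite mulPm; apply/matrixP=> i j; rewrite !mxE inE.
    case: (boolP (j \in V)) => //= Hj.
    by rewrite (Hcs _).1 // (Hcs _).1 // subrr.
  rewrite mulPm; apply/matrixP => i j; rewrite !mxE inE.
  by case: (boolP (j \in V)) => //= /negbTE; rewrite /V => ->.
have HW : forall D, D \in subdiv pts setT c -> (W *m Pm D <= Bm D)%MS.
  move=> D HD; rewrite /W mul_col_mx col_mx_sub; apply/andP; split.
    rewrite (_ : constdir pts c *m Pm D = ind D).
      apply/submxP; exists (row_mx 0 1%:M).
      by rewrite /Bm mul_row_col mul0mx add0r mul1mx.
    rewrite mulPm; apply/matrixP=> i j; rewrite !mxE.
    case: (boolP (j \in D)) => // Hj.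
    by rewrite (subsetP (Vsub D HD) j Hj).
  apply/row_subP => k; rewrite row_mul.
  rewrite (_ : row k Dm = cs (lift ord0 k) - cs ord0); last first.
    by apply/rowP => j; rewrite !mxE.
  rewrite mulmxBl; apply: addmx_sub; first exact: aff (Hcs _) HD.
  rewrite -scaleN1r; apply: scalemx_sub; exact: aff (Hcs _) HD.
pose Uf (i : nat) := \bigcup_(j < i) nth set0 s j.
pose g (i : nat) : int := (#|nth set0 s i :\: Uf i|%:Z - n%:Z
                     + dimconv R pts (nth set0 s i :&: Uf i))%R.
have Hn : forall i, (W *m Pm (nth set0 s i) <= Bm (nth set0 s i))%MS
                    /\ nth set0 s i \subset V.
  move=> i; case: (ltnP i (size s)) => hi.
    have HD := Hs _ (mem_nth set0 hi).
    by split; [apply: HW | apply: Vsub].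
  by rewrite nth_default // mulPm0 sub0mx; split=> //; apply: sub0set.
have claim : forall m, ((\rank (W *m Pm (Uf m)))%:Z + \sum_(i < m) g i
                        <= #|Uf m|%:Z)%R /\ Uf m \subset V.
  elim=> [|m [IH1 IH2]].
    rewrite /Uf !big_ord0 mulPm0 mxrank0 cards0; split=> //; exact: sub0set.
  have eU : Uf m.+1 = Uf m :|: nth set0 s m by rewrite /Uf big_ord_recr.
  case: (Hn m) => HnA HnB.
  have hs := step _ W (Uf m) _ HnA.
  have hd := rank_dim (nth set0 s m :&: Uf m).
  have card : #|Uf m :|: nth set0 s m| = (#|Uf m| + #|nth set0 s m :\: Uf m|)%N.
    rewrite -(cardsID (Uf m) (Uf m :|: nth set0 s m)) setUK.
    by rewrite setDUl setDv set0U.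
  split; last by rewrite eU subUset IH2 HnB.
  rewrite eU card big_ord_recr /=.
  have gm : g m = (#|nth set0 s m :\: Uf m|%:Z - n%:Z
                     + dimconv R pts (nth set0 s m :&: Uf m))%R by [].
  rewrite gm.
  move: IH1; set S := \sum_(i < m) g i => IH1.
  move: hs hd IH1.
  set a := \rank (W *m Pm (Uf m :|: _)).
  set b := \rank (W *m Pm (Uf m)).
  set r := \rank (Bm _).
  set e := dimconv _ _ _.
  set u := #|Uf m|. set v := #|_ :\: Uf m|.
  lia.
have [C1 C2] := claim (size s).
have hf := final _ W (Uf (size s)) _ HV.
have eV : #|V :\: Uf (size s)| = (#|V| - #|Uf (size s)|)%N.
  by rewrite cardsD (setIidPr C2).
have hle := subset_leq_card C2.
have -> : rhs_bound pts c s = (#|V|%:Z - 1 - \sum_(i < size s) g i)%R by [].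
move: C1 hf hle; rewrite eV Hrk.
set S := \sum_(i < size s) g i.
set b := \rank _. set u := #|Uf _|. set v := #|V|.
lia.
Qed.

End Helpers.

Theorem mainTheorem8 (R : realFieldType) (n N : nat)
  (pts : 'I_N -> 'rV[int]_n) (c : 'I_N -> R) :
  (3 < n)%N -> (0 < N)%N -> injective pts ->
  forall s : seq {set 'I_N},
    uniq s -> (forall D, D \in s <-> D \in nonsimplex_cells pts c) ->
  forall d : nat, rank_atleast pts c d ->
    (d%:Z <= rhs_bound pts c s)%R.
Proof.
move=> _ _ _ s _ Hs d Hd; apply: main_aux Hd => D /Hs.
by rewrite inE => /andP[].
Qed.
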